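(* Let $\mathcal{U}$ be an idempotent ultrafilter in $(\beta\mathbb{N},+)$. If $\mu,\nu\in\mathbb{A}_{\mathcal{U}}$, then $\mu\,\hat{}\,\nu\in\mathbb{A}_{\mathcal{U}}$.
   Context: For $a,b\subseteq(0,1]$ put $a\,\hat{}\,b=\tfrac12 a\cup\tfrac12(b+1)$; $\mathbb{T}$ is the set generated from $\mathbf{1}=\{1\}$ by $\hat{}$ (the free binary system on one generator), $\#(t)$ is the cardinality of $t$, $\mathbb{T}_n=\{t:\#(t)=n\}$, and $\mathbb{A}_n$ is the set of probability measures on $\mathbb{T}_n$. For a set $S$, $\Pr(S)$ denotes the set of finitely additive probability measures on $S$, identified with the positive linear functionals $f$ on $\ell^\infty(S)$ with $f(\bar 1)=1$, equipped with the weak* topology; $\mathbb{A}_n\subseteq\Pr(\mathbb{T})$. For $\mu,\nu\in\Pr(\mathbb{T})$, $(\mu\,\hat{}\,\nu)(f)=\int\int f(x\,\hat{}\,y)\,d\nu(y)\,d\mu(x)$ for $f\in\ell^\infty(\mathbb{T})$. $\beta\mathbb{N}$ carries the usual extension of addition ($W\in\mathcal{U}+\mathcal{V}$ iff $\{m:\{n:m+n\in W\}\in\mathcal{V}\}\in\mathcal{U}$), and $\mathcal{U}$ is idempotent if $\mathcal{U}+\mathcal{U}=\mathcal{U}$. $\mathbb{A}_{\mathcal{U}}$ is the set of $\mu\in\Pr(\mathbb{T})$ such that for every weak*-open $W\ni\mu$, $\{m\in\mathbb{N}:W\cap\mathbb{A}_m\neq\emptyset\}\in\mathcal{U}$. 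*)

(* Defs.v *)
From Stdlib Require Import Reals List.
Open Scope R_scope.

(* The free binary system on one generator: full binary trees.
   [leaf] is the generator 1 = {1}, [hat a b] is a ^ b. *)
Inductive tree : Type :=
| leaf : tree
| hat : tree -> tree -> tree.

(* #(t): cardinality of the subset t of (0,1]; #(a^b) = #a + #b *)
Fixpoint card (t : tree) : nat :=
  match t with
  | leaf => 1%nat
  | hat a b => (card a + card b)%nat
  end.

Definition bounded {S : Type} (f : S -> R) : Prop :=
  exists M : R, forall s, Rabs (f s) <= M.

(* Pr(S): positive linear functionals on l^infty(S) with f(1) = 1
   (a functional is only ever evaluated on bounded functions). *)
Definition is_mean {S : Type} (m : (S -> R) -> R) : Prop :=
  (forall f g, bounded f -> bounded g ->
      m (fun s => f s + g s) = m f + m g) /\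
  (forall (c : R) f, bounded f -> m (fun s => c * f s) = c * m f) /\
  (forall f, bounded f -> (forall s, 0 <= f s) -> 0 <= m f) /\
  m (fun _ => 1) = 1.

(* open sets of Pr(S) in the weak* topology (generated by the evaluations
   at elements of l^infty(S)) *)
Definition weak_open {S : Type} (W : ((S -> R) -> R) -> Prop) : Prop :=
  forall mu, is_mean mu -> W mu ->
    exists (fs : list (S -> R)) (eps : R),
      0 < eps /\ (forall f, In f fs -> bounded f) /\
      forall nu, is_mean nu ->
        (forall f, In f fs -> Rabs (nu f - mu f) < eps) -> W nu.

(* A_n: probability measures on the finite set T_n, viewed in Pr(T):
   mu(f) = sum_i w_i f(t_i), with t_i in T_n, w_i >= 0, sum w_i = 1. *)
Definition in_A (n : nat) (mu : (tree -> R) -> R) : Prop :=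
  exists l : list (R * tree),
    (forall p, In p l -> 0 <= fst p /\ card (snd p) = n) /\
    fold_right Rplus 0 (map fst l) = 1 /\
    forall f, bounded f ->
      mu f = fold_right Rplus 0 (map (fun p => fst p * f (snd p)) l).

Definition conv (mu nu : (tree -> R) -> R) : (tree -> R) -> R :=
  fun f => mu (fun x => nu (fun y => f (hat x y))).

(* ultrafilters on N = {1,2,3,...} (subsets of nat containing the positives) *)
Definition ultrafilter (U : (nat -> Prop) -> Prop) : Prop :=
  (forall A B : nat -> Prop, U A -> (forall n, A n -> B n) -> U B) /\
  (forall A B : nat -> Prop, U A -> U B -> U (fun n => A n /\ B n)) /\
  ~ U (fun _ => False) /\
  (forall A : nat -> Prop, U A \/ U (fun n => ~ A n)) /\
  U (fun n => (0 < n)%nat).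

Definition usum (U V : (nat -> Prop) -> Prop) : (nat -> Prop) -> Prop :=
  fun W => U (fun m => V (fun n => W (m + n)%nat)).

Definition idempotent (U : (nat -> Prop) -> Prop) : Prop :=
  forall W : nat -> Prop, usum U U W <-> U W.

Definition in_AU (U : (nat -> Prop) -> Prop) (mu : (tree -> R) -> R) : Prop :=
  is_mean mu /\
  forall W, weak_open W -> W mu ->
    U (fun m => exists nu, W nu /\ in_A m nu).

(* Main.v *)
Require Import Defs.
From Stdlib Require Import Reals List.
From Stdlib Require Import Lra Lia FunctionalExtensionality.
Require Import Defs.
Open Scope R_scope.

Definition sumR (l : list R) := fold_right Rplus 0 l.

Lemma sumR_app l1 l2 : sumR (l1 ++ l2) = sumR l1 + sumR l2.
Proof. induction l1; simpl; unfold sumR in *; simpl; try rewrite IHl1; lra. Qed.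

Lemma sumR_plus {A} (l : list A) (h k : A -> R) :
  sumR (map (fun x => h x + k x) l) = sumR (map h l) + sumR (map k l).
Proof. induction l; unfold sumR in *; simpl; try rewrite IHl; lra. Qed.

Lemma sumR_scal {A} (l : list A) c (h : A -> R) :
  sumR (map (fun x => c * h x) l) = c * sumR (map h l).
Proof. induction l; unfold sumR in *; simpl; try rewrite IHl; lra. Qed.

Lemma sumR_ext {A} (l : list A) (h k : A -> R) :
  (forall x, In x l -> h x = k x) -> sumR (map h l) = sumR (map k l).
Proof. intro H. f_equal. apply map_ext_in. auto. Qed.

Lemma sumR_nonneg {A} (l : list A) (h : A -> R) :
  (forall x, In x l -> 0 <= h x) -> 0 <= sumR (map h l).
Proof. induction l; unfold sumR in *; simpl; intros H. lra.
  pose proof (H a (or_introl eq_refl)). pose proof (IHl (fun x Hx => H x (or_intror Hx))). lra. Qed.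

Lemma sumR_flat {A B} (G : B -> R) (k : A -> A -> B) (l l' : list A) :
  sumR (map G (flat_map (fun p => map (k p) l') l)) =
  sumR (map (fun p => sumR (map (fun q => G (k p q)) l')) l).
Proof. induction l; simpl. reflexivity.
  rewrite map_app, sumR_app, IHl, map_map. unfold sumR; simpl. reflexivity. Qed.

Lemma sumR_diff (l : list (R * tree)) (a b : tree -> R) c :
  (forall p, In p l -> 0 <= fst p) -> (forall p, In p l -> Rabs (a (snd p) - b (snd p)) <= c) ->
  Rabs (sumR (map (fun p => fst p * a (snd p)) l) - sumR (map (fun p => fst p * b (snd p)) l))
   <= c * sumR (map fst l).
Proof. induction l as [|p l IH]; unfold sumR in *; simpl; intros H1 H2.
  rewrite Rminus_0_r, Rabs_R0; lra.
  pose proof (H1 p (or_introl eq_refl)). pose proof (H2 p (or_introl eq_refl)).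
  specialize (IH (fun x Hx => H1 x (or_intror Hx)) (fun x Hx => H2 x (or_intror Hx))).
  set (S1 := fold_right Rplus 0 (map (fun p0 => fst p0 * a (snd p0)) l)) in *.
  set (S2 := fold_right Rplus 0 (map (fun p0 => fst p0 * b (snd p0)) l)) in *.
  replace (fst p * a (snd p) + S1 - (fst p * b (snd p) + S2)) with
    (fst p * (a (snd p) - b (snd p)) + (S1 - S2)) by ring.
  eapply Rle_trans. apply Rabs_triang. rewrite Rabs_mult, (Rabs_right (fst p)) by lra.
  assert (fst p * Rabs (a (snd p) - b (snd p)) <= fst p * c) by (apply Rmult_le_compat_l; lra).
  lra. Qed.

Lemma bounded_plus {S} (f g : S -> R) : bounded f -> bounded g -> bounded (fun s => f s + g s).
Proof. intros [M HM] [N HN]. exists (M + N). intro s.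
  eapply Rle_trans. apply Rabs_triang. specialize (HM s); specialize (HN s); lra. Qed.

Lemma bounded_scal {S} c (f : S -> R) : bounded f -> bounded (fun s => c * f s).
Proof. intros [M HM]. exists (Rabs c * M). intro s. rewrite Rabs_mult.
  apply Rmult_le_compat_l. apply Rabs_pos. auto. Qed.

Lemma bounded_const {S} c : bounded (fun _ : S => c).
Proof. exists (Rabs c). intros; lra. Qed.

Lemma mean_bound {S} (m : (S -> R) -> R) f M :
  is_mean m -> (forall s, Rabs (f s) <= M) -> Rabs (m f) <= M.
Proof. intros [Hadd [Hsc [Hpos H1]]] HM.
  assert (Hb : bounded f) by (exists M; auto).
  assert (E1 := Hadd (fun _ => M * 1) (fun s => -1 * f s) (bounded_const _) (bounded_scal _ _ Hb)).
  assert (E2 := Hadd (fun _ => M * 1) (fun s => 1 * f s) (bounded_const _) (bounded_scal _ _ Hb)).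
  cbv beta in E1, E2.
  assert (E3 := Hsc M (fun _ => 1) (bounded_const _)). cbv beta in E3.
  assert (E4 := Hsc (-1) f Hb). assert (E5 := Hsc 1 f Hb).
  assert (P1 := Hpos (fun s => M * 1 + -1 * f s) (bounded_plus _ _ (bounded_const _) (bounded_scal _ _ Hb))).
  assert (P2 := Hpos (fun s => M * 1 + 1 * f s) (bounded_plus _ _ (bounded_const _) (bounded_scal _ _ Hb))).
  cbv beta in P1, P2.
  assert (0 <= m (fun s => M * 1 + -1 * f s)).
  { apply P1. intro s. specialize (HM s). pose proof (Rle_abs (f s)); lra. }
  assert (0 <= m (fun s => M * 1 + 1 * f s)).
  { apply P2. intro s. specialize (HM s). 
    pose proof (Rle_abs (- f s)). rewrite Rabs_Ropp in *. lra. }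
  rewrite H1 in E3. apply Rabs_le; split; lra. Qed.

Lemma bounded_F (nu : (tree -> R) -> R) f : is_mean nu -> bounded f ->
  bounded (fun x => nu (fun y => f (hat x y))).
Proof. intros Hn [M HM]. exists M. intro x. apply mean_bound; auto. Qed.

Lemma bounded_hat (f : tree -> R) x : bounded f -> bounded (fun y => f (hat x y)).
Proof. intros [M HM]. exists M. auto. Qed.

Lemma conv_mean mu nu : is_mean mu -> is_mean nu -> is_mean (conv mu nu).
Proof. intros Hm Hn. pose proof Hm as [Ma [Ms [Mp M1]]]. pose proof Hn as [Na [Ns [Np N1]]].
  unfold conv. split; [|split; [|split]].
  - intros f g Hf Hg.
    rewrite <- Ma by (apply bounded_F; auto).
    f_equal. apply functional_extensionality. intro x.
    apply (Na (fun y => f (hat x y)) (fun y => g (hat x y))); apply bounded_hat; auto.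
  - intros c f Hf. rewrite <- Ms by (apply bounded_F; auto).
    f_equal. apply functional_extensionality. intro x.
    apply (Ns c (fun y => f (hat x y))); apply bounded_hat; auto.
  - intros f Hf Hpos. apply Mp. apply bounded_F; auto. intro x. apply Np.
    apply bounded_hat; auto. auto.
  - replace (fun x : tree => nu (fun _ : tree => 1)) with (fun _ : tree => 1). exact M1.
    apply functional_extensionality. intro; auto.
Qed.

Lemma in_A_mean n rho : in_A n rho -> is_mean rho.
Proof. intros [l [H1 [H2 H3]]]. split; [|split; [|split]].
  - intros f g Hf Hg. rewrite !H3 by (auto; apply bounded_plus; auto).
    fold (sumR (map (fun p => fst p * (f (snd p) + g (snd p))) l)).
    rewrite <- sumR_plus. apply sumR_ext. intros; ring.
  - intros c f Hf. rewrite !H3 by (auto; apply bounded_scal; auto).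
    fold (sumR (map (fun p => fst p * (c * f (snd p))) l)).
    rewrite <- sumR_scal. apply sumR_ext. intros; ring.
  - intros f Hf Hp. rewrite H3 by auto. apply sumR_nonneg. intros p Hp'.
    apply Rmult_le_pos. apply H1; auto. auto.
  - rewrite H3 by apply bounded_const. fold (sumR (map fst l)) in H2.
    fold (sumR (map (fun p => fst p * 1) l)).
    replace (sumR (map (fun p => fst p * 1) l)) with (sumR (map fst l)). exact H2.
    apply sumR_ext. intros; ring.
Qed.

Lemma in_A_conv a b mu1 nu1 : in_A a mu1 -> in_A b nu1 -> in_A (a + b) (conv mu1 nu1).
Proof. intros HA HB. pose proof (in_A_mean _ _ HB) as Hn.
  destruct HA as [l [H1 [H2 H3]]]. destruct HB as [l' [H1' [H2' H3']]].
  exists (flat_map (fun p => map (fun q => (fst p * fst q, hat (snd p) (snd q))) l') l).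
  split; [|split].
  - intros r Hr. apply in_flat_map in Hr. destruct Hr as [p [Hp Hr]].
    apply in_map_iff in Hr. destruct Hr as [q [<- Hq]]. simpl.
    destruct (H1 p Hp), (H1' q Hq). split. apply Rmult_le_pos; auto. lia.
  - fold (sumR (map fst (flat_map (fun p => map (fun q => (fst p * fst q, hat (snd p) (snd q))) l') l))).
    rewrite sumR_flat. simpl. rewrite <- H2. fold (sumR (map fst l)). apply sumR_ext.
    intros p _. rewrite sumR_scal. fold (sumR (map fst l')) in H2'. rewrite H2'. ring.
  - intros f Hf. unfold conv. rewrite H3 by (apply bounded_F; auto).
    fold (sumR (map (fun p => fst p * f (snd p))
      (flat_map (fun p => map (fun q => (fst p * fst q, hat (snd p) (snd q))) l') l))).
    rewrite sumR_flat. fold (sumR (map (fun p => fst p * nu1 (fun y => f (hat (snd p) y))) l)).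
    apply sumR_ext. intros p _. simpl. rewrite H3' by (apply bounded_hat; auto).
    fold (sumR (map (fun q => fst q * f (hat (snd p) (snd q))) l')).
    rewrite <- sumR_scal. apply sumR_ext. intros; ring.
Qed.

Definition Bset (m0 : (tree -> R) -> R) (gs : list (tree -> R)) (e : R)
  (rho : (tree -> R) -> R) : Prop :=
  exists d, 0 < d /\ forall g, In g gs -> Rabs (rho g - m0 g) + d < e.

Lemma Bset_open m0 gs e : (forall g, In g gs -> bounded g) -> weak_open (Bset m0 gs e).
Proof. intros Hb rho _ [d [Hd H]]. exists gs, (d/2). split. lra. split. auto.
  intros s _ Hs. exists (d/2). split. lra. intros g Hg.
  specialize (H g Hg). specialize (Hs g Hg).
  pose proof (Rabs_triang (s g - rho g) (rho g - m0 g)).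
  replace (s g - rho g + (rho g - m0 g)) with (s g - m0 g) in H0 by ring. lra.
Qed.

Lemma Bset_center m0 gs e : 0 < e -> Bset m0 gs e m0.
Proof. intro He. exists (e/2). split. lra. intros. rewrite Rminus_diag, Rabs_R0. lra. Qed.

Theorem lemma3p1 (U : (nat -> Prop) -> Prop) (mu nu : (tree -> R) -> R) :
  ultrafilter U -> idempotent U ->
  in_AU U mu -> in_AU U nu -> in_AU U (conv mu nu).
Proof.
  intros HU Hid [Hmu Hmu'] [Hnu Hnu'].
  destruct HU as [Hup _].
  split. apply conv_mean; auto.
  intros W HW HWc.
  destruct (HW _ (conv_mean _ _ Hmu Hnu) HWc) as [fs [eps [Heps [Hfsb Hnb]]]].
  apply Hid. unfold usum.
  set (F := fun (f : tree -> R) x => nu (fun y => f (hat x y))).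
  assert (HV : weak_open (Bset mu (map F fs) (eps/2))).
  { apply Bset_open. intros g Hg. apply in_map_iff in Hg. destruct Hg as [f [<- Hf]].
    apply bounded_F; auto. }
  specialize (Hmu' _ HV (Bset_center _ _ (eps/2) ltac:(lra))).
  apply (Hup _ _ Hmu'). intros a [mu1 [HV1 HA1]].
  pose proof HA1 as [l [Hl1 [Hl2 Hl3]]].
  set (gs := flat_map (fun f => map (fun p => fun y => f (hat (snd p) y)) l) fs).
  assert (HV2 : weak_open (Bset nu gs (eps/2))).
  { apply Bset_open. intros g Hg. apply in_flat_map in Hg. destruct Hg as [f [Hf Hg]].
    apply in_map_iff in Hg. destruct Hg as [p [<- Hp]]. apply bounded_hat; auto. }
  specialize (Hnu' _ HV2 (Bset_center _ _ (eps/2) ltac:(lra))).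
  apply (Hup _ _ Hnu'). intros b [nu1 [HW2 HB1]].
  exists (conv mu1 nu1). split; [| apply in_A_conv; auto].
  apply Hnb. apply conv_mean; eapply in_A_mean; eauto.
  intros f Hf.
  destruct HV1 as [d1 [Hd1 H1]]. destruct HW2 as [d2 [Hd2 H2]].
  assert (E1 := H1 (F f) (in_map _ _ _ Hf)).
  pose proof (in_A_mean _ _ HB1) as Hn1.
  assert (E2 : Rabs (mu1 (fun x => nu1 (fun y => f (hat x y))) - mu1 (F f)) <= eps/2 - d2).
  { rewrite !Hl3 by (apply bounded_F; auto).
    fold (sumR (map (fun p => fst p * nu1 (fun y => f (hat (snd p) y))) l)).
    fold (sumR (map (fun p => fst p * F f (snd p)) l)).
    fold (sumR (map fst l)) in Hl2.
    replace (eps/2 - d2) with ((eps/2 - d2) * sumR (map fst l)) by (rewrite Hl2; ring).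
    apply (sumR_diff l (fun x => nu1 (fun y => f (hat x y))) (F f)).
    intros p Hp; apply Hl1; auto.
    intros p Hp. unfold F.
    assert (Hg : In (fun y => f (hat (snd p) y)) gs).
    { apply in_flat_map. exists f. split; auto. apply in_map_iff. exists p; auto. }
    specialize (H2 _ Hg). lra. }
  unfold conv. fold (F f).
  pose proof (Rabs_triang (mu1 (fun x => nu1 (fun y => f (hat x y))) - mu1 (F f))
                          (mu1 (F f) - mu (F f))).
  replace (mu1 (fun x => nu1 (fun y => f (hat x y))) - mu1 (F f) + (mu1 (F f) - mu (F f)))
    with (mu1 (fun x => nu1 (fun y => f (hat x y))) - mu (F f)) in H by ring.
  lra.
Qed.
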